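(* Let $I=(N,O,\succsim)$ be a general instance, $p$ a generalized random matching and $p'$ its associated random matching for the associated instance $I'$. Then $p$ is ex-post weakly stable if and only if $p'$ is ex-post weakly stable and $p$ is non-wasteful (i.e., $p'$ respects non-wastefulness).
   Context: General instance: $N=\{1,\dots,n\}$ agents, $O=\{o_1,\dots,o_m\}$ objects ($m,n\ge1$ arbitrary), $\emptyset$ the null object; each agent $i$ has a weak order $\succsim_i$ over $O\cup\{\emptyset\}$, each object $o$ a weak order $\succsim_o$ over $N\cup\{\emptyset\}$, with either $o\succ_i\emptyset$ or $\emptyset\succ_i o$, and either $i\succ_o\emptyset$ or $\emptyset\succ_o i$. $(i,o)$ is acceptable if $o\succ_i\emptyset$ and $i\succ_o\emptyset$. A generalized random matching is an $n\times m$ nonnegative matrix with row and column sums $\le1$; deterministic if entries are in $\{0,1\}$. $p$ is individually rational if $p(i,o)=0$ whenever $\emptyset\succ_i o$ or $\emptyset\succ_o i$; non-wasteful if there is no acceptable $(i,o)$ with $\sum_{o':o'\succsim_i o}p(i,o')<1$ and $\sum_j p(j,o)<1$. A generalized deterministic matching is weakly stable if it is individually rational and there is no acceptable $(i,o)$ with $\sum_{o':o'\succsim_i o}p(i,o')=0$ and $\sum_{j:j\succsim_o i}p(j,o)=0$. A generalized random matching $p$ is ex-post weakly stable if it is non-wasteful and can be written as $\sum_{j}\lambda_jP_j$ ($\lambda_j\in(0,1]$, $\sum\lambda_j=1$) with every $P_j$ a weakly stable generalized deterministic matching. Associated instance: $D=\{d_1,\dots,d_m\}$, $\Phi=\{\phi_1,\dots,\phi_n\}$,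 $N'=N\cup D$, $O'=O\cup\Phi$, with weak orders (blocks best to worst, consecutive blocks strict): $i\in N$: objects acceptable to $i$ by $\succsim_i$, $\phi_i$, $\phi_k$ ($k\ne i$) in increasing index, objects unacceptable to $i$ by $\succsim_i$; $o_j$: agents acceptable to $o_j$ by $\succsim_{o_j}$, $d_j$, $d_k$ ($k\ne j$) in increasing index, agents unacceptable to $o_j$ by $\succsim_{o_j}$; $d_j$: $o_j$, other objects of $O$ in increasing index, then null objects with $\phi_k\succsim'_{d_j}\phi_l$ iff $k\succsim_{o_j}l$; $\phi_i$: $i$, other agents of $N$ in increasing index, then dummies with $d_k\succsim'_{\phi_i}d_l$ iff $o_k\succsim_i o_l$. Associated random matching: $p'(i,o_j)=p(i,o_j)$, $p'(d_j,\phi_i)=p(i,o_j)$, $p'(i,\phi_i)=1-\sum_o p(i,o)$, $p'(d_j,o_j)=1-\sum_i p(i,o_j)$, other entries $0$ (an $(n+m)\times(n+m)$ bistochastic matrix). For $I'$: a deterministic matching $q$ (bistochastic $\{0,1\}$-matrix) is weakly stable if there are no $a,b\in N'$, $c,c'\in O'$ with $q(a,c')=1$, $q(b,c)=1$, $c\succ'_a c'$, $a\succ'_c b$; a random matching (bistochastic matrix) is ex-post weakly stable if it is a convex combination with positive weights of weakly stable deterministic matchings. *)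

(* Defs.v *)
From HB Require Import structures.
From mathcomp Require Import all_boot all_order all_algebra.
From mathcomp Require Import reals.
Set Implicit Arguments. Unset Strict Implicit. Unset Printing Implicit Defensive.
Import Order.TTheory GRing.Theory Num.Theory.
Local Open Scope ring_scope.

Definition weak_order (T : Type) (r : rel T) : Prop := total r /\ transitive r.

Definition sgt (T : Type) (r : rel T) : rel T := fun x y => r x y && ~~ r y x.

(* General instance: agents 'I_n, objects 'I_m, null object = None.
   aprefs i x y  means  x ≿_i y ;  oprefs o x y  means  x ≿_o y. *)
Record instance (n m : nat) := Instance {
  aprefs : 'I_n -> rel (option 'I_m);
  oprefs : 'I_m -> rel (option 'I_n);
  aprefs_wo : forall i, weak_order (aprefs i);
  oprefs_wo : forall o, weak_order (oprefs o);
  aprefs_null : forall i o,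
    sgt (aprefs i) (Some o) None || sgt (aprefs i) None (Some o);
  oprefs_null : forall o i,
    sgt (oprefs o) (Some i) None || sgt (oprefs o) None (Some i)
}.

Section General.
Variables (R : realType) (n m : nat) (I : instance n m).

Definition acceptable (i : 'I_n) (o : 'I_m) : bool :=
  sgt (aprefs I i) (Some o) None && sgt (oprefs I o) (Some i) None.

Definition gen_random_matching (p : 'M[R]_(n, m)) : Prop :=
  (forall i o, 0 <= p i o) /\
  (forall i, \sum_(o < m) p i o <= 1) /\
  (forall o, \sum_(i < n) p i o <= 1).

Definition gen_deterministic (p : 'M[R]_(n, m)) : Prop :=
  gen_random_matching p /\ (forall i o, p i o = 0 \/ p i o = 1).

Definition indiv_rational (p : 'M[R]_(n, m)) : Prop :=
  forall i o, (sgt (aprefs I i) None (Some o) || sgt (oprefs I o) None (Some i)) ->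
    p i o = 0.

Definition non_wasteful (p : 'M[R]_(n, m)) : Prop :=
  ~ exists i o, [/\ acceptable i o,
      \sum_(o' < m | aprefs I i (Some o') (Some o)) p i o' < 1 &
      \sum_(j < n) p j o < 1].

Definition weakly_stable_det (p : 'M[R]_(n, m)) : Prop :=
  gen_deterministic p /\ indiv_rational p /\
  ~ exists i o, [/\ acceptable i o,
      \sum_(o' < m | aprefs I i (Some o') (Some o)) p i o' = 0 &
      \sum_(j < n | oprefs I o (Some j) (Some i)) p j o = 0].

Definition ex_post_ws (p : 'M[R]_(n, m)) : Prop :=
  non_wasteful p /\
  exists (k : nat) (lam : 'I_k -> R) (P : 'I_k -> 'M[R]_(n, m)),
    [/\ forall t, 0 < lam t <= 1,
        \sum_(t < k) lam t = 1,
        p = \sum_(t < k) lam t *: P t &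
        forall t, weakly_stable_det (P t)].

(* ---------- Associated instance I' ----------
   N' = 'I_(n + m): split a = inl i (agent i) or inr j (dummy d_j).
   O' = 'I_(m + n): split c = inl o (object o) or inr i (null object phi_i).
   Preferences: block number (smaller = better, consecutive blocks strict),
   then comparison inside a block. *)

Definition assoc_apref (i : 'I_n) : rel 'I_(m + n) := fun c c' =>
  let ai := aprefs I i in
  let blk (x : 'I_(m + n)) : nat :=
    match split x with
    | inl o => if sgt ai (Some o) None then 0 else 3
    | inr k => if k == i then 1 else 2
    end%N in
  (blk c < blk c')%N ||
  ((blk c == blk c') &&
   match split c, split c' with
   | inl o, inl o' => ai (Some o) (Some o')
   | inr k, inr l => (k <= l)%N
   | _, _ => false
   end).

Definition assoc_dpref (j : 'I_m) : rel 'I_(m + n) := fun c c' =>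
  let blk (x : 'I_(m + n)) : nat :=
    match split x with
    | inl o => if o == j then 0 else 1
    | inr _ => 2
    end%N in
  (blk c < blk c')%N ||
  ((blk c == blk c') &&
   match split c, split c' with
   | inl o, inl o' => (o <= o')%N
   | inr k, inr l => oprefs I j (Some k) (Some l)
   | _, _ => false
   end).

Definition assoc_opref (j : 'I_m) : rel 'I_(n + m) := fun a a' =>
  let oj := oprefs I j in
  let blk (x : 'I_(n + m)) : nat :=
    match split x with
    | inl i => if sgt oj (Some i) None then 0 else 3
    | inr k => if k == j then 1 else 2
    end%N in
  (blk a < blk a')%N ||
  ((blk a == blk a') &&
   match split a, split a' with
   | inl i, inl i' => oj (Some i) (Some i')
   | inr k, inr l => (k <= l)%N
   | _, _ => false
   end).

Definition assoc_phipref (i : 'I_n) : rel 'I_(n + m) := fun a a' =>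
  let blk (x : 'I_(n + m)) : nat :=
    match split x with
    | inl k => if k == i then 0 else 1
    | inr _ => 2
    end%N in
  (blk a < blk a')%N ||
  ((blk a == blk a') &&
   match split a, split a' with
   | inl k, inl k' => (k <= k')%N
   | inr k, inr l => aprefs I i (Some k) (Some l)
   | _, _ => false
   end).

Definition assoc_agent_pref (a : 'I_(n + m)) : rel 'I_(m + n) :=
  match split a with inl i => assoc_apref i | inr j => assoc_dpref j end.

Definition assoc_object_pref (c : 'I_(m + n)) : rel 'I_(n + m) :=
  match split c with inl o => assoc_opref o | inr i => assoc_phipref i end.

Definition assoc_matching (p : 'M[R]_(n, m)) : 'M[R]_(n + m, m + n) :=
  \matrix_(a, c)
    match split a, split c with
    | inl i, inl o => p i o
    | inr j, inr i => p i j
    | inl i, inr k => if k == i then 1 - \sum_(o < m) p i o else 0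
    | inr j, inl o => if o == j then 1 - \sum_(i < n) p i j else 0
    end.

(* random matching of I' = bistochastic matrix *)
Definition bistochastic (q : 'M[R]_(n + m, m + n)) : Prop :=
  (forall a c, 0 <= q a c) /\
  (forall a, \sum_c q a c = 1) /\
  (forall c, \sum_a q a c = 1).

Definition assoc_deterministic (q : 'M[R]_(n + m, m + n)) : Prop :=
  bistochastic q /\ (forall a c, q a c = 0 \/ q a c = 1).

Definition assoc_weakly_stable_det (q : 'M[R]_(n + m, m + n)) : Prop :=
  assoc_deterministic q /\
  ~ exists a b c c', [/\ q a c' = 1, q b c = 1,
       sgt (assoc_agent_pref a) c c' &
       sgt (assoc_object_pref c) a b].

Definition assoc_ex_post_ws (q : 'M[R]_(n + m, m + n)) : Prop :=
  bistochastic q /\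
  exists (k : nat) (lam : 'I_k -> R) (Q : 'I_k -> 'M[R]_(n + m, m + n)),
    [/\ forall t, 0 < lam t,
        \sum_(t < k) lam t = 1,
        q = \sum_(t < k) lam t *: Q t &
        forall t, assoc_weakly_stable_det (Q t)].

End General.

(* Main.v *)
Require Import Defs.
From HB Require Import structures.
From mathcomp Require Import all_boot all_order all_algebra.
From mathcomp Require Import reals.
Set Implicit Arguments. Unset Strict Implicit. Unset Printing Implicit Defensive.
Import Order.TTheory GRing.Theory Num.Theory.
Local Open Scope ring_scope.

Lemma splitL (a b : nat) (i : 'I_a) : split (lshift b i) = inl i.
Proof. exact: (@unsplitK a b (inl i)). Qed.
Lemma splitR (a b : nat) (j : 'I_b) : split (rshift a j) = inr j.
Proof. exact: (@unsplitK a b (inr j)). Qed.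

Lemma shiftP (a b : nat) (x : 'I_(a + b)) :
  (exists i, x = lshift b i) \/ (exists j, x = rshift a j).
Proof. by case: (split_ordP x) => [i ->|j ->]; [left|right]; eexists. Qed.

Definition lexrel (T : Type) (blk : T -> nat) (r : rel T) : rel T :=
  fun x y => (blk x < blk y)%N || ((blk x == blk y) && r x y).

Lemma sgt_lex T blk (r : rel T) x y :
  sgt (lexrel blk r) x y =
  (blk x < blk y)%N || ((blk x == blk y) && (r x y && ~~ r y x)).
Proof. by rewrite /sgt /lexrel; case: ltngtP. Qed.

Lemma wo_refl T (r : rel T) : weak_order r -> reflexive r.
Proof. by case=> tot _ x; case/orP: (tot x x). Qed.

Lemma sgtE T (r : rel T) x y : weak_order r -> sgt r x y = ~~ r y x.
Proof.
case=> tot _; rewrite /sgt; case: (boolP (r y x)) => H; rewrite ?andbF ?andbT //.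
by move: (tot x y); rewrite (negbTE H) orbF.
Qed.

Lemma wo_trans T (r : rel T) x y z : weak_order r -> r x y -> r y z -> r x z.
Proof. by case=> _ tr H1 H2; apply: tr H1 H2. Qed.

Lemma wo_tot T (r : rel T) x y : weak_order r -> ~~ r x y -> r y x.
Proof. by case=> tot _ H; move: (tot x y); rewrite (negbTE H). Qed.

Lemma sum_ge_term (R : numDomainType) (T : finType) (F : T -> R) x :
  (forall y, 0 <= F y) -> F x <= \sum_y F y.
Proof. by move=> F0; rewrite (bigD1 x) //= lerDl sumr_ge0. Qed.

Section Proof.
Variables (R : realType) (n m : nat) (I : instance n m).
Local Notation ap := (aprefs I).
Local Notation op := (oprefs I).

Definition bA (i : 'I_n) (s : 'I_m + 'I_n) : nat :=
  match s with
  | inl o => if sgt (ap i) (Some o) None then 0 else 3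
  | inr k => if k == i then 1 else 2 end%N.
Definition iA (i : 'I_n) (s s' : 'I_m + 'I_n) : bool :=
  match s, s' with
  | inl o, inl o' => ap i (Some o) (Some o')
  | inr k, inr l => (k <= l)%N
  | _, _ => false end.
Lemma aprefE i : assoc_apref I i =
  lexrel (fun c => bA i (split c)) (fun c c' => iA i (split c) (split c')).
Proof. by []. Qed.

Definition bD (j : 'I_m) (s : 'I_m + 'I_n) : nat :=
  match s with
  | inl o => if o == j then 0 else 1
  | inr _ => 2 end%N.
Definition iD (j : 'I_m) (s s' : 'I_m + 'I_n) : bool :=
  match s, s' with
  | inl o, inl o' => (o <= o')%N
  | inr k, inr l => op j (Some k) (Some l)
  | _, _ => false end.
Lemma dprefE j : assoc_dpref I j =
  lexrel (fun c => bD j (split c)) (fun c c' => iD j (split c) (split c')).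
Proof. by []. Qed.

Definition bO (j : 'I_m) (s : 'I_n + 'I_m) : nat :=
  match s with
  | inl i => if sgt (op j) (Some i) None then 0 else 3
  | inr k => if k == j then 1 else 2 end%N.
Definition iO (j : 'I_m) (s s' : 'I_n + 'I_m) : bool :=
  match s, s' with
  | inl i, inl i' => op j (Some i) (Some i')
  | inr k, inr l => (k <= l)%N
  | _, _ => false end.
Lemma oprefE j : assoc_opref I j =
  lexrel (fun c => bO j (split c)) (fun c c' => iO j (split c) (split c')).
Proof. by []. Qed.

Definition bP (i : 'I_n) (s : 'I_n + 'I_m) : nat :=
  match s with
  | inl k => if k == i then 0 else 1
  | inr _ => 2 end%N.
Definition iP (i : 'I_n) (s s' : 'I_n + 'I_m) : bool :=
  match s, s' with
  | inl k, inl k' => (k <= k')%N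
  | inr k, inr l => ap i (Some k) (Some l)
  | _, _ => false end.
Lemma phiprefE i : assoc_phipref I i =
  lexrel (fun c => bP i (split c)) (fun c c' => iP i (split c) (split c')).
Proof. by []. Qed.

Lemma agL i : assoc_agent_pref I (lshift m i) = assoc_apref I i.
Proof. by rewrite /assoc_agent_pref splitL. Qed.
Lemma agR j : assoc_agent_pref I (rshift n j) = assoc_dpref I j.
Proof. by rewrite /assoc_agent_pref splitR. Qed.
Lemma obL o : assoc_object_pref I (lshift n o) = assoc_opref I o.
Proof. by rewrite /assoc_object_pref splitL. Qed.
Lemma obR k : assoc_object_pref I (rshift m k) = assoc_phipref I k.
Proof. by rewrite /assoc_object_pref splitR. Qed.

Definition prefE := (agL, agR, obL, obR, aprefE, dprefE, oprefE, phiprefE,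
  sgt_lex, splitL, splitR).


End Proof.

Section Mat.
Variables (n m : nat).
Variable (R : realType).
Implicit Types (P : 'M[R]_(n, m)) (Q : 'M[R]_(n + m, m + n)).

Lemma amLL P i o : assoc_matching P (lshift m i) (lshift n o) = P i o.
Proof. by rewrite mxE !splitL. Qed.
Lemma amRR P i j : assoc_matching P (rshift n j) (rshift m i) = P i j.
Proof. by rewrite mxE !splitR. Qed.
Lemma amLR P i k : assoc_matching P (lshift m i) (rshift m k) =
  if k == i then 1 - \sum_o P i o else 0.
Proof. by rewrite mxE splitL splitR. Qed.
Lemma amRL P j o : assoc_matching P (rshift n j) (lshift n o) =
  if o == j then 1 - \sum_i P i j else 0.
Proof. by rewrite mxE splitL splitR. Qed.

Lemma gd_row0 P i o o' : gen_deterministic P -> P i o = 1 -> o' != o -> P i o' = 0.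
Proof.
case=> [[P0 [Pr Pc]] _] Pio neq.
have H : \sum_(o'' < m | o'' != o) P i o'' = 0.
  apply/le_anti/andP; split; last by apply: sumr_ge0.
  by have := Pr i; rewrite (bigD1 o) //= Pio -{2}(addr0 1) lerD2l.
exact: (psumr_eq0P _ H).
Qed.

Lemma gd_col0 P i j o : gen_deterministic P -> P i o = 1 -> j != i -> P j o = 0.
Proof.
case=> [[P0 [Pr Pc]] _] Pio neq.
have H : \sum_(j' < n | j' != i) P j' o = 0.
  apply/le_anti/andP; split; last by apply: sumr_ge0.
  by have := Pc o; rewrite (bigD1 i) //= Pio -{2}(addr0 1) lerD2l.
exact: (psumr_eq0P _ H).
Qed.

Lemma gd_rs01 P i : gen_deterministic P ->
  (\sum_o P i o = 0) \/ (\sum_o P i o = 1).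
Proof.
move=> gd; case: (pickP (fun o => P i o == 1)) => [o /eqP Pio|H].
  right; rewrite (bigD1 o) //= Pio big1 ?addr0 // => o' neq.
  exact: gd_row0 Pio neq.
left; apply: big1 => o _; case: (gd.2 i o) => // e.
by move: (H o); rewrite e eqxx.
Qed.

Lemma gd_cs01 P o : gen_deterministic P ->
  (\sum_i P i o = 0) \/ (\sum_i P i o = 1).
Proof.
move=> gd; case: (pickP (fun i => P i o == 1)) => [i /eqP Pio|H].
  right; rewrite (bigD1 i) //= Pio big1 ?addr0 // => o' neq.
  exact: gd_col0 Pio neq.
left; apply: big1 => i _; case: (gd.2 i o) => // e.
by move: (H i); rewrite e eqxx.
Qed.

Lemma ad_row0 Q a c c' : assoc_deterministic Q -> Q a c = 1 -> c' != c -> Q a c' = 0.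
Proof.
case=> [[Q0 [Qr Qc]] _] Qac neq.
have H : \sum_(c'' | c'' != c) Q a c'' = 0.
  by have := Qr a; rewrite (bigD1 c) //= Qac => /eqP; rewrite -{2}(addr0 1) (inj_eq (addrI _)) => /eqP.
exact: (psumr_eq0P _ H).
Qed.

Lemma ad_col0 Q a b c : assoc_deterministic Q -> Q a c = 1 -> b != a -> Q b c = 0.
Proof.
case=> [[Q0 [Qr Qc]] _] Qac neq.
have H : \sum_(b' | b' != a) Q b' c = 0.
  by have := Qc c; rewrite (bigD1 a) //= Qac => /eqP; rewrite -{2}(addr0 1) (inj_eq (addrI _)) => /eqP.
exact: (psumr_eq0P _ H).
Qed.

Lemma ad_rowex Q a : assoc_deterministic Q -> exists c, Q a c = 1.
Proof.
case=> [[Q0 [Qr Qc]] Q01].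
case: (pickP (fun c => Q a c == 1)) => [c /eqP|H]; first by exists c.
have : \sum_c Q a c = 0.
  by apply: big1 => c _; case: (Q01 a c) => // e; move: (H c); rewrite e eqxx.
by rewrite Qr => /eqP; rewrite oner_eq0.
Qed.

Lemma ad_colex Q c : assoc_deterministic Q -> exists a, Q a c = 1.
Proof.
case=> [[Q0 [Qr Qc]] Q01].
case: (pickP (fun a => Q a c == 1)) => [a /eqP|H]; first by exists a.
have : \sum_a Q a c = 0.
  by apply: big1 => a _; case: (Q01 a c) => // e; move: (H a); rewrite e eqxx.
by rewrite Qc => /eqP; rewrite oner_eq0.
Qed.

Lemma am_bist P : gen_random_matching P -> bistochastic (assoc_matching P).
Proof.
case=> P0 [Pr Pc]; split; [|split].
- move=> a c; case: (shiftP a) => [[i ->]|[j ->]]; case: (shiftP c) => [[o ->]|[k ->]].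
  + by rewrite amLL.
  + by rewrite amLR; case: eqP => _ //; rewrite subr_ge0.
  + by rewrite amRL; case: eqP => _ //; rewrite subr_ge0.
  + by rewrite amRR.
- move=> a; rewrite big_split_ord /=; case: (shiftP a) => [[i ->]|[j ->]].
  + under eq_bigr do rewrite amLL. under [X in _ + X]eq_bigr do rewrite amLR.
    rewrite [X in _ + X](bigD1 i) //= eqxx [X in _ + (_ + X)]big1 ?addr0 ?subrKC //.
    by move=> k /negbTE ->.
  + under eq_bigr do rewrite amRL. under [X in _ + X]eq_bigr do rewrite amRR.
    rewrite (bigD1 j) //= eqxx [X in _ + X + _]big1 ?addr0 ?subrK //.
    by move=> k /negbTE ->.
- move=> c; rewrite big_split_ord /=; case: (shiftP c) => [[o ->]|[k ->]].
  + under eq_bigr do rewrite amLL. under [X in _ + X]eq_bigr do rewrite amRL.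
    rewrite [X in _ + X](bigD1 o) //= eqxx [X in _ + (_ + X)]big1 ?addr0 ?subrKC // => j.
    by rewrite eq_sym => /negbTE ->.
  + under eq_bigr do rewrite amLR. under [X in _ + X]eq_bigr do rewrite amRR.
    rewrite (bigD1 k) //= eqxx [X in _ + X + _]big1 ?addr0 ?subrK // => i.
    by rewrite eq_sym => /negbTE ->.
Qed.

End Mat.

Lemma ifeq1 (R : realType) (b : bool) (S : R) : (if b then 1 - S else 0) = 1 -> b /\ S = 0.
Proof.
case: b => [|/eqP]; last by rewrite eq_sym oner_eq0.
move/(congr1 (fun x => 1 - x)) => /=; rewrite opprB addrC subrK subrr.
by [].
Qed.

Section DirA.
Variables (R : realType) (n m : nat) (I : instance n m).
Local Notation ap := (aprefs I).
Local Notation op := (oprefs I).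

Lemma det_acc (P : 'M[R]_(n, m)) i o : indiv_rational I P -> P i o = 1 ->
  sgt (ap i) (Some o) None /\ sgt (op o) (Some i) None.
Proof.
move=> IR Pio; have nz : P i o != 0 by rewrite Pio oner_eq0.
split; apply/negPn/negP => H; move/eqP: nz; apply; apply: IR; apply/orP;
  [left; have := aprefs_null I i o|right; have := oprefs_null I o i];
  by rewrite (negbTE H).
Qed.

Lemma ws_assoc (P : 'M[R]_(n, m)) : weakly_stable_det I P ->
  assoc_weakly_stable_det I (assoc_matching P).
Proof.
case=> gd [IR NB]; split.
  split; first exact: am_bist gd.1.
  move=> a c; case: (shiftP a) => [[i ->]|[j ->]]; case: (shiftP c) => [[o ->]|[k ->]].
  + by rewrite amLL; exact: gd.2.
  + by rewrite amLR; case: eqP => _; [case: (gd_rs01 i gd) => ->; rewrite ?subr0 ?subrr; auto|auto].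
  + by rewrite amRL; case: eqP => _; [case: (gd_cs01 j gd) => ->; rewrite ?subr0 ?subrr; auto|auto].
  + by rewrite amRR; exact: gd.2.
case=> a [b [c [c' [Hac Hbc Hpa Hpc]]]].
have P0 := gd.1.1.
move: Hac Hbc Hpa Hpc.
case: (shiftP a) => [[i ->]|[j ->]]; case: (shiftP c) => [[o ->]|[k ->]].
- move=> Hac Hbc Hpa Hpc.
  have C1 : sgt (ap i) (Some o) None /\
            (forall o'', ap i (Some o'') (Some o) -> P i o'' = 0).
    move: Hac Hpa; case: (shiftP c') => [[o' ->]|[k' ->]]; rewrite !prefE /=.
    + rewrite amLL => Pio'; rewrite (det_acc IR Pio').1.
      case: ifP => // Hs /and3P [_ _ Hn]; split => // o'' Ho''.
      apply: (gd_row0 gd Pio'); apply/eqP => e; subst.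
      by rewrite Ho'' in Hn.
    + rewrite amLR => /ifeq1 [/eqP e S0]; subst.
      rewrite eqxx andbF orbF; case: ifP => // Hs _; split => // o'' _.
      exact: (psumr_eq0P _ S0).
  have C2 : sgt (op o) (Some i) None /\
            (forall j, op o (Some j) (Some i) -> P j o = 0).
    move: Hbc Hpc; case: (shiftP b) => [[i' ->]|[j' ->]]; rewrite !prefE /=.
    + rewrite amLL => Pi'o; rewrite (det_acc IR Pi'o).2.
      case: ifP => // Hs /and3P [_ _ Hn]; split => // j Hj.
      apply: (gd_col0 gd Pi'o); apply/eqP => e; subst.
      by rewrite Hj in Hn.
    + rewrite amRL => /ifeq1 [/eqP e S0]; subst.
      rewrite eqxx andbF orbF; case: ifP => // Hs _; split => // j _.
      exact: (psumr_eq0P _ S0).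
  apply: NB; exists i, o; split.
  + by rewrite /acceptable C1.1 C2.1.
  + by apply: big1 => o'' H; apply: C1.2.
  + by apply: big1 => j H; apply: C2.2.
- move=> Hac _ Hpa _; move: Hac Hpa.
  case: (shiftP c') => [[o' ->]|[k' ->]]; rewrite !prefE /=.
  + rewrite amLL => Pio'; rewrite (det_acc IR Pio').1.
    by case: (k == i).
  + rewrite amLR => /ifeq1 [/eqP e _]; subst.
    by rewrite eqxx; case: eqP => [->|] //=; rewrite leqnn andbF.
- move=> Hac Hbc Hpa Hpc.
  move: Hac Hpa; case: (shiftP c') => [[o' ->]|[k' ->]]; rewrite !prefE /=.
  + rewrite amRL => /ifeq1 [/eqP e _]; subst.
    by rewrite eqxx; case: eqP => [->|] //=; rewrite leqnn andbF.
  move=> _ _; move: Hbc Hpc.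
  case: (shiftP b) => [[i' ->]|[j' ->]]; rewrite !prefE /=.
  + rewrite amLL => Pi'o; rewrite (det_acc IR Pi'o).2.
    by case: (j == o).
  + rewrite amRL => /ifeq1 [/eqP e _]; subst.
    by rewrite eqxx; case: eqP => [->|] //=; rewrite leqnn andbF.
- move=> Hac Hbc Hpa Hpc.
  move: Hac Hpa; case: (shiftP c') => [[o' ->]|[i ->]]; rewrite !prefE /=.
    by rewrite amRL => /ifeq1 [/eqP e _]; subst; rewrite eqxx.
  rewrite amRR => Pij /andP [Hjki Hjik].
  move: Hbc Hpc; case: (shiftP b) => [[i' ->]|[l ->]]; rewrite !prefE /=.
    by rewrite amLR => /ifeq1 [/eqP e _]; subst; rewrite eqxx.
  rewrite amRR => Pkl /andP [Hkjl Hklj].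
  have [acck _] := det_acc IR Pkl.
  have [_ accj] := det_acc IR Pij.
  apply: NB; exists k, j; split.
  + rewrite /acceptable (sgtE (Some j) None (aprefs_wo I k)).
    rewrite (sgtE (Some k) None (oprefs_wo I j)).
    rewrite (sgtE (Some l) None (aprefs_wo I k)) in acck.
    rewrite (sgtE (Some i) None (oprefs_wo I j)) in accj.
    apply/andP; split; apply/negP => H.
      by move/negP: acck; apply; apply: wo_trans (aprefs_wo I k) H Hkjl.
    by move/negP: accj; apply; apply: wo_trans (oprefs_wo I j) H Hjki.
  + apply: big1 => o'' H; case: (eqVneq o'' l) => [e|ne].
      by subst; rewrite H in Hklj.
    exact: (gd_row0 gd Pkl ne).
  + apply: big1 => i' H; case: (eqVneq i' i) => [e|ne].
      by subst; rewrite H in Hjik.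
    exact: (gd_col0 gd Pij ne).
Qed.
End DirA.

Lemma sgt_asym T (r : rel T) x y : sgt r x y -> sgt r y x = false.
Proof. by rewrite /sgt => /andP [-> _]; rewrite andbF. Qed.

Section DirB.
Variables (R : realType) (n m : nat) (I : instance n m).
Local Notation ap := (aprefs I).
Local Notation op := (oprefs I).

Definition restr (Q : 'M[R]_(n + m, m + n)) : 'M[R]_(n, m) :=
  \matrix_(i, o) Q (lshift m i) (lshift n o).

Lemma restr_ws Q : assoc_weakly_stable_det I Q -> weakly_stable_det I (restr Q).
Proof.
case=> qd NB; have [[Q0 [Qr Qc]] Q01] := qd.
have gd : gen_deterministic (restr Q).
  split; [split; [|split]|].
  - by move=> i o; rewrite mxE.
  - move=> i; have := Qr (lshift m i); rewrite big_split_ord /= => E.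
    under eq_bigr do rewrite mxE.
    by rewrite -E lerDl sumr_ge0.
  - move=> o; have := Qc (lshift n o); rewrite big_split_ord /= => E.
    under eq_bigr do rewrite mxE.
    by rewrite -E lerDl sumr_ge0.
  - by move=> i o; rewrite mxE.
have IR : indiv_rational I (restr Q).
  move=> i o H; rewrite mxE; case: (Q01 (lshift m i) (lshift n o)) => // Q1.
  exfalso; case/orP: H => H.
  + have [b Qb] := ad_colex (rshift m i) qd.
    apply: NB; exists (lshift m i), b, (rshift m i), (lshift n o); split => //.
      by rewrite !prefE /= (sgt_asym H) eqxx.
    have Q0' : Q (lshift m i) (rshift m i) = 0.
      by apply: (ad_row0 qd Q1); rewrite eq_rlshift.
    move: Qb; case: (shiftP b) => [[i' ->]|[l ->]] Qb; rewrite !prefE /= eqxx //.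
    case: eqP => // e; subst.
    by move: Qb; rewrite Q0' => /eqP; rewrite eq_sym oner_eq0.
  + have [c' Qc'] := ad_rowex (rshift n o) qd.
    apply: NB; exists (rshift n o), (lshift m i), (lshift n o), c'; split => //;
      last by rewrite !prefE /= (sgt_asym H) eqxx.
    have Q0' : Q (rshift n o) (lshift n o) = 0.
      by apply: (ad_col0 qd Q1); rewrite eq_rlshift.
    move: Qc'; case: (shiftP c') => [[o' ->]|[l ->]] Qc'; rewrite !prefE /= eqxx //.
    case: eqP => // e; subst.
    by move: Qc'; rewrite Q0' => /eqP; rewrite eq_sym oner_eq0.
split => //; split => //.
case=> i [o [acc S1 S2]]; move/andP: acc => [accA accO].
have [c' Qc'] := ad_rowex (lshift m i) qd.
have [b Qb] := ad_colex (lshift n o) qd.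
have r0 : forall i o, 0 <= restr Q i o by move=> i' o'; rewrite mxE.
apply: NB; exists (lshift m i), b, (lshift n o), c'; split => //.
- move: Qc'; case: (shiftP c') => [[o' ->]|[k ->]] Q1; rewrite !prefE /= accA //; last by case: eqP.
  have R1 : restr Q i o' = 1 by rewrite mxE.
  rewrite (det_acc IR R1).1 /=.
  have Hn : ~~ ap i (Some o') (Some o).
    apply/negP => H; have := psumr_eq0P (fun o _ => r0 i o) S1 H.
    by rewrite R1 => /eqP; rewrite oner_eq0.
  by rewrite Hn (wo_tot (aprefs_wo I i) Hn).
- move: Qb; case: (shiftP b) => [[j ->]|[kk ->]] Q1; rewrite !prefE /= accO //; last by case: eqP.
  have R1 : restr Q j o = 1 by rewrite mxE.
  rewrite (det_acc IR R1).2 /=.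
  have Hn : ~~ op o (Some j) (Some i).
    apply/negP => H; have := psumr_eq0P (fun j _ => r0 j o) S2 H.
    by rewrite R1 => /eqP; rewrite oner_eq0.
  by rewrite Hn (wo_tot (oprefs_wo I o) Hn).
Qed.

End DirB.

Lemma am_lin (R : realType) (n m k : nat) (lam : 'I_k -> R) (P : 'I_k -> 'M[R]_(n, m)) :
  \sum_t lam t = 1 ->
  assoc_matching (\sum_t lam t *: P t) = \sum_t lam t *: assoc_matching (P t).
Proof.
move=> L1; apply/matrixP => a c; rewrite summxE.
under [RHS]eq_bigr do rewrite mxE.
case: (shiftP a) => [[i ->]|[j ->]]; case: (shiftP c) => [[o ->]|[l ->]].
- rewrite amLL summxE; apply: eq_bigr => t _; by rewrite amLL mxE.
- rewrite amLR; under eq_bigr do rewrite amLR.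
  case: eqP => _; last by rewrite big1 // => t _; rewrite mulr0.
  under [RHS]eq_bigr do rewrite mulrBr mulr1.
  rewrite sumrB L1; congr (_ - _).
  under eq_bigr do rewrite summxE.
  under eq_bigr do under eq_bigr do rewrite mxE.
  by rewrite exchange_big; apply: eq_bigr => t _; rewrite mulr_sumr.
- rewrite amRL; under eq_bigr do rewrite amRL.
  case: eqP => _; last by rewrite big1 // => t _; rewrite mulr0.
  under [RHS]eq_bigr do rewrite mulrBr mulr1.
  rewrite sumrB L1; congr (_ - _).
  under eq_bigr do rewrite summxE.
  under eq_bigr do under eq_bigr do rewrite mxE.
  by rewrite exchange_big; apply: eq_bigr => t _; rewrite mulr_sumr.
- rewrite amRR summxE; apply: eq_bigr => t _; by rewrite amRR mxE.
Qed.

Theorem proposition26 (R : realType) (n m : nat) (I : instance n m)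
    (p : 'M[R]_(n, m)) :
  (0 < n)%N -> (0 < m)%N ->
  gen_random_matching p ->
  (ex_post_ws I p <->
   assoc_ex_post_ws I (assoc_matching p) /\ non_wasteful I p).
Proof.
move=> _ _ grm; split.
- case=> nw [k [lam [P [lam01 L1 pdec Pws]]]]; split => //; split.
    exact: am_bist.
  exists k, lam, (fun t => assoc_matching (P t)); split => //.
  + by move=> t; case/andP: (lam01 t).
  + by rewrite pdec am_lin.
  + by move=> t; apply: ws_assoc.
- case=> [[bist [k [lam [Q [lam0 L1 qdec Qws]]]]] nw]; split => //.
  exists k, lam, (fun t => restr (Q t)); split => //.
  + move=> t; rewrite lam0 /= -L1; apply: sum_ge_term => t'; exact: ltW.
  + apply/matrixP => i o; rewrite -(amLL p i o) qdec !summxE.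
    by apply: eq_bigr => t _; rewrite !mxE.
  + by move=> t; apply: restr_ws.
Qed.
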